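(* Let $\mathbb{K}\in\{\mathbb{R},\mathbb{C}\}$, let $\mathbf{R}_U\in\mathbb{K}^{n\times n}$ be self-adjoint positive definite, and let $U=\mathbb{K}^n$ carry the norm $\|\mathbf{x}\|_U:=\langle\mathbf{R}_U\mathbf{x},\mathbf{x}\rangle^{1/2}$. Let $\mathbf{u}^1,\dots,\mathbf{u}^m\in U$ and $\mathbf{U}_m:=[\mathbf{u}^1,\dots,\mathbf{u}^m]\in\mathbb{K}^{n\times m}$. Let $\mathbf{Q}\in\mathbb{K}^{s\times n}$ satisfy $\mathbf{Q}^{\mathrm{H}}\mathbf{Q}=\mathbf{R}_U$, and let $\mathbf{B}_r^*\in\mathbb{K}^{s\times m}$ be a best rank-$r$ approximation of $\mathbf{Q}\mathbf{U}_m$ with respect to the Frobenius norm $\|\cdot\|_F$. Then for any rank-$r$ matrix $\mathbf{B}_r\in\mathbb{K}^{s\times m}$, $$\frac1m\|\mathbf{Q}\mathbf{U}_m-\mathbf{B}_r^*\|_F^2\le\frac1m\sum_{i=1}^m\|\mathbf{u}^i-\mathbf{P}_{U_r}\mathbf{u}^i\|_U^2\le\frac1m\|\mathbf{Q}\mathbf{U}_m-\mathbf{B}_r\|_F^2,$$ where $U_r:=\{\mathbf{R}_U^{-1}\mathbf{Q}^{\mathrm{H}}\mathbf{b}:\mathbf{b}\in\mathrm{span}(\mathbf{B}_r)\}$ and $\mathbf{P}_{U_r}$ is the orthogonal projection onto $U_r$ with respect to $\|\cdot\|_U$.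
   Context: $\mathrm{span}(\mathbf{B}_r)$ denotes the column space of $\mathbf{B}_r$; $\mathbf{M}^{\mathrm{H}}$ is the (conjugate) transpose. *)

(* Defs.v *)
From HB Require Import structures.
From mathcomp Require Import all_boot all_order all_algebra.
From mathcomp Require Import complex.
Set Implicit Arguments. Unset Strict Implicit. Unset Printing Implicit Defensive.
Import Order.TTheory GRing.Theory Num.Theory.
Local Open Scope ring_scope.

(* The scalar field K is either the reals (any real closed field R, with
   trivial conjugation) or the complexes R[i] (with complex conjugation
   conjc).  The statement is written once for a generic numFieldType K
   equipped with a conjugation map [cj], and instantiated twice. *)

Section Generic.
Variables (K : numFieldType) (cj : K -> K).

Definition adjmx (p q : nat) (M : 'M[K]_(p, q)) : 'M[K]_(q, p) := map_mx cj M^T.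

Definition ip (n : nat) (x y : 'cV[K]_n) : K := (adjmx y *m x) 0 0.

Definition hpd (n : nat) (A : 'M[K]_n) : Prop :=
  adjmx A = A /\ forall x : 'cV[K]_n, x != 0 -> 0 < ip (A *m x) x.

Definition normU2 (n : nat) (RU : 'M[K]_n) (x : 'cV[K]_n) : K := ip (RU *m x) x.

Definition frob2 (p q : nat) (A : 'M[K]_(p, q)) : K :=
  \sum_(i < p) \sum_(j < q) `|A i j| ^+ 2.

Definition colspan (p q : nat) (M : 'M[K]_(p, q)) (x : 'cV[K]_p) : Prop :=
  exists c : 'cV[K]_q, x = M *m c.

Definition Ur (n s m : nat) (RU : 'M[K]_n) (Q : 'M[K]_(s, n)) (B : 'M[K]_(s, m))
  (x : 'cV[K]_n) : Prop :=
  exists b : 'cV[K]_s, colspan B b /\ x = invmx RU *m adjmx Q *m b.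

Definition is_orth_projU (n : nat) (RU : 'M[K]_n) (V : 'cV[K]_n -> Prop)
  (P : 'M[K]_n) : Prop :=
  forall x : 'cV[K]_n, V (P *m x) /\
    forall w : 'cV[K]_n, V w -> ip (RU *m (x - P *m x)) w = 0.

Definition prop2p4_stmt : Prop :=
  forall (n m s r : nat) (RU : 'M[K]_n) (Um : 'M[K]_(n, m)) (Q : 'M[K]_(s, n))
         (Bstar Br : 'M[K]_(s, m)) (P : 'M[K]_n),
    hpd RU ->
    adjmx Q *m Q = RU ->
    (\rank Bstar <= r)%N ->
    (forall B : 'M[K]_(s, m), (\rank B <= r)%N ->
        frob2 (Q *m Um - Bstar) <= frob2 (Q *m Um - B)) ->
    \rank Br = r ->
    is_orth_projU RU (Ur RU Q Br) P ->
    (m%:R)^-1 * frob2 (Q *m Um - Bstar)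
      <= (m%:R)^-1 * \sum_(i < m) normU2 RU (col i Um - P *m col i Um)
    /\ (m%:R)^-1 * \sum_(i < m) normU2 RU (col i Um - P *m col i Um)
      <= (m%:R)^-1 * frob2 (Q *m Um - Br).

End Generic.

(* Main.v *)
Require Import Defs.
From HB Require Import structures.
From mathcomp Require Import all_boot all_order all_algebra.
From mathcomp Require Import complex.
From mathcomp Require Import ring.
Set Implicit Arguments. Unset Strict Implicit. Unset Printing Implicit Defensive.
Import Order.TTheory GRing.Theory Num.Theory.
Local Open Scope ring_scope.

Section Gen.
Variables (K : numFieldType) (f : {rmorphism K -> K}).
Hypothesis fK : involutive f.
Hypothesis fnorm : forall a : K, f a * a = `|a| ^+ 2.

Local Notation adj := (adjmx f).

Lemma adjM p q k (A : 'M[K]_(p, q)) (B : 'M[K]_(q, k)) :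
  adj (A *m B) = adj B *m adj A.
Proof. by rewrite /adjmx trmx_mul map_mxM. Qed.

Lemma adjB p q (A B : 'M[K]_(p, q)) : adj (A - B) = adj A - adj B.
Proof. by rewrite /adjmx linearB /= map_mxB. Qed.

Lemma adjD p q (A B : 'M[K]_(p, q)) : adj (A + B) = adj A + adj B.
Proof. by apply/matrixP => i j; rewrite /adjmx !mxE rmorphD. Qed.

Lemma adj0 p q : adj (0 : 'M[K]_(p, q)) = 0.
Proof. by apply/matrixP => i j; rewrite /adjmx !mxE rmorph0. Qed.

Lemma adjK p q (A : 'M[K]_(p, q)) : adj (adj A) = A.
Proof. by apply/matrixP => i j; rewrite /adjmx !mxE fK. Qed.

Definition nrm p (v : 'cV[K]_p) : K := (adj v *m v) 0 0.

Lemma sym p (a b : 'cV[K]_p) : (adj a *m b) 0 0 = f ((adj b *m a) 0 0).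
Proof.
have -> : adj a *m b = adj (adj b *m a) by rewrite adjM adjK.
by rewrite /adjmx !mxE.
Qed.

Lemma nrm_ge0 p (v : 'cV[K]_p) : 0 <= nrm v.
Proof.
rewrite /nrm mxE; apply: sumr_ge0 => k _.
by rewrite /adjmx !mxE fnorm exprn_ge0.
Qed.

Lemma nrmD p (a b : 'cV[K]_p) :
  nrm (a + b) = nrm a + nrm b + (adj a *m b) 0 0 + (adj b *m a) 0 0.
Proof.
rewrite /nrm adjD mulmxDl !mulmxDr !mxE.
ring.
Qed.

Lemma frob2E p q (A : 'M[K]_(p, q)) : frob2 A = \sum_(j < q) nrm (col j A).
Proof.
rewrite /frob2 exchange_big; apply: eq_bigr => j _.
rewrite /nrm mxE; apply: eq_bigr => i _.
by rewrite /adjmx !mxE fnorm.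
Qed.

Lemma colB p q (A B : 'M[K]_(p, q)) j : col j (A - B) = col j A - col j B.
Proof. by apply/matrixP => i k; rewrite !mxE. Qed.

Lemma colM p q k (A : 'M[K]_(p, q)) (B : 'M[K]_(q, k)) j :
  col j (A *m B) = A *m col j B.
Proof. by apply/matrixP => i k'; rewrite !mxE; apply: eq_bigr => l _; rewrite !mxE. Qed.

Lemma hpd_unit n (RU : 'M[K]_n) : hpd f RU -> RU \in unitmx.
Proof.
case=> _ Hp; rewrite -unitmx_tr unitmxE unitfE; apply/negP => /det0P [v nz vR].
have := Hp v^T; rewrite -trmx0 (inj_eq trmx_inj) nz => /(_ isT).
have -> : RU *m v^T = 0 by rewrite -[RU]trmxK -trmx_mul vR trmx0.
by rewrite /ip mulmx0 mxE ltxx.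
Qed.

Theorem gen : prop2p4_stmt f.
Proof.
move=> n m s r RU Um Q Bstar Br P Hh HQ rkS Hbest rkB Hproj.
have uR := hpd_unit Hh.
set M := invmx RU *m adj Q *m Br.
have key : forall x : 'cV[K]_n, forall c : 'cV[K]_m,
    normU2 f RU (x - P *m x) <= nrm (Q *m x - Br *m c).
  move=> x c; set y := x - P *m x.
  have [[b [[c' hb] hPx]] orth] := Hproj x.
  set u := invmx RU *m adj Q *m (Br *m c).
  set a := Q *m y.
  set w := Q *m (P *m x - u).
  set z := Q *m u - Br *m c.
  have Ew : Q *m x - Br *m c = a + (w + z).
    by rewrite /a /w /z /y !mulmxBr !addrA !subrK.
  have wa : (adj w *m a) 0 0 = 0.
    have := orth (P *m x - u).
    rewrite /w /a /ip adjM -mulmxA [adj Q *m _]mulmxA HQ; apply.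
    exists (Br *m (c' - c)); split; first by exists (c' - c).
    by rewrite hPx hb /u -!mulmxBr.
  have Qz : adj Q *m z = 0.
    by rewrite /z mulmxBr mulmxA HQ /u -!mulmxA (mulKVmx uR) subrr.
  have za : (adj z *m a) 0 0 = 0.
    by rewrite /a mulmxA -[Q in adj z *m Q]adjK -adjM Qz adj0 mul0mx mxE.
  have -> : normU2 f RU y = nrm a.
    by rewrite /normU2 /ip /nrm /a adjM -mulmxA [adj Q *m (Q *m y)]mulmxA HQ.
  have c1 : (adj a *m (w + z)) 0 0 = 0.
    by rewrite mulmxDr mxE sym wa sym za rmorph0 addr0.
  have c2 : (adj (w + z) *m a) 0 0 = 0 by rewrite sym c1 rmorph0.
  rewrite Ew nrmD c1 c2 !addr0 lerDl; exact: nrm_ge0.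
have m0 : 0 <= (m%:R : K)^-1 by rewrite invr_ge0 ler0n.
have nE : forall y, normU2 f RU y = nrm (Q *m y).
  by move=> y; rewrite /normU2 /ip /nrm adjM -mulmxA [adj Q *m (Q *m y)]mulmxA HQ.
have Esum : \sum_(i < m) normU2 f RU (col i Um - P *m col i Um)
    = frob2 (Q *m Um - Q *m P *m Um).
  rewrite frob2E; apply: eq_bigr => i _.
  by rewrite -mulmxA -mulmxBr colM colB colM nE.
have rkP : (\rank P <= r)%N.
  rewrite -mxrank_tr -rkB; apply: (leq_trans _ (mxrankM_maxr (invmx RU *m adj Q) Br)).
  rewrite -(mxrank_tr (_ *m Br)); apply: mxrankS; apply/row_subP => i.
  have [[b [[c hb] hP]] _] := Hproj (col i 1%:M).
  have -> : row i P^T = (P *m col i 1%:M)^T.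
    by rewrite -colM mulmx1; apply/matrixP => k l; rewrite !mxE.
  by rewrite hP hb mulmxA trmx_mul; apply/submxP; exists c^T.
split; apply: (ler_wpM2l m0).
  rewrite Esum; apply: Hbest.
  exact: leq_trans (mxrankM_maxl _ _) (leq_trans (mxrankM_maxr _ _) rkP).
rewrite frob2E; apply: ler_sum => i _; rewrite colB colM.
by have := key (col i Um) (col i 1%:M); rewrite -[Br *m _]colM mulmx1 nE.
Qed.
End Gen.

Theorem proposition2p4 :
  (forall R : rcfType, prop2p4_stmt (K := R) id) /\
  (forall R : rcfType, prop2p4_stmt (K := R[i]) (@conjc R)).
Proof.
split=> R.
  apply: (@gen R idfun) => // a; by rewrite /= -normrX ger0_norm ?sqr_ge0 // expr2.
apply: (@gen R[i] (@conjc R)); first exact: conjcK.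
by move=> a; rewrite sqr_normc mulrC.
Qed.
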